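(* Let $c_2,c_3$ be constants, $\mu(t)=t^2+c_2t+c_3$, and for $n\ge 0$ let $\vartheta_n(t)=(-4)^{-n}(2t+1/2+c_2)_n(-2t+1/2-c_2)_n$. Let $\{P_n\}_{n\ge0}$ be a sequence of monic polynomials in $\mu(t)$, $\deg P_n=n$, satisfying $$\mu(t)P_n=P_{n+1}+\beta_nP_n+\gamma_nP_{n-1}\quad(n\ge 0),\qquad P_{-1}=0,\ P_0=1,$$ and write $P_n=\sum_{k=0}^{n}A_{n,k}\vartheta_k(t)$, so that $A=(A_{n,k})_{n,k\ge0}$ is lower triangular with unit diagonal. Define the numbers $f_n$ by $\mu(t)\vartheta_n(t)=\vartheta_{n+1}(t)+f_n\vartheta_n(t)$, $n\ge0$. Then $$f_n=-\frac{c_2^2}{4}+\frac{(2n+1)^2}{16}+c_3,$$ and $$L\,A=A\,\mathbf{X}^1,\qquad \mathbf{X}^1:=X+\operatorname{diag}\{f_0,f_1,f_2,\ldots\},$$ where $L$ is the infinite tridiagonal matrix with diagonal entries $L_{n,n}=\beta_n$ ($n\ge0$), superdiagonal entries $L_{n,n+1}=1$, subdiagonal entries $L_{n,n-1}=\gamma_n$ ($n\ge1$), all other entries zero, and $X$ is the infinite matrix with $X_{n,n+1}=1$ and all other entries zero.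
   Context: Here $(a)_n=a(a+1)\cdots(a+n-1)$, $(a)_0=1$, is the Pochhammer symbol; each $\vartheta_n(t)$ is a monic polynomial of degree $n$ in the variable $\mu(t)$, and $\{\vartheta_n\}$ is a basis of the polynomials in $\mu(t)$. Indices of infinite matrices start at $0$. *)

(* Defs.v *)
From mathcomp Require Import all_boot all_order all_algebra.
Set Implicit Arguments. Unset Strict Implicit. Unset Printing Implicit Defensive.
Import Order.TTheory GRing.Theory Num.Theory.
Local Open Scope ring_scope.

Definition poch (R : comRingType) (a : {poly R}) (n : nat) : {poly R} :=
  \prod_(i < n) (a + (i%:R)%:P).

Definition mu (R : comRingType) (c2 c3 : R) : {poly R} :=
  'X^2 + c2 *: 'X + c3%:P.

Definition theta (R : fieldType) (c2 : R) (n : nat) : {poly R} :=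
  ((-4 : R) ^- n) *: (poch (2%:R *: 'X + (2^-1 + c2)%:P) n
                      * poch (- (2%:R *: 'X) + (2^-1 - c2)%:P) n).

Definition infmx (R : Type) := nat -> nat -> R.

(* Product of infinite matrices M N, for M whose row i is supported on
   columns j <= i+1 (true of the tridiagonal L and of the lower triangular A);
   for such M this is exactly the usual product \sum_j M i j * N j k. *)
Definition bandmul (R : ringType) (M N : infmx R) : infmx R :=
  fun i k => \sum_(j < i.+2) M i j * N j k.

Definition jacobiL (R : ringType) (beta gamma : nat -> R) : infmx R :=
  fun i j => if j == i.+1 then 1
             else if j == i then beta i
             else if j.+1 == i then gamma i
             else 0.

Definition shiftX (R : ringType) : infmx R :=
  fun i j => if j == i.+1 then 1 else 0.

Definition X1 (R : ringType) (f : nat -> R) : infmx R :=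
  fun i j => shiftX R i j + (if j == i then f i else 0).

(* Main.v *)
Require Import Defs.
From mathcomp Require Import all_boot all_order all_algebra ring zify.
Import Order.TTheory GRing.Theory Num.Theory.
Local Open Scope ring_scope.
Set Implicit Arguments. Unset Strict Implicit.

Definition Qp (R : numFieldType) (c2 : R) (n : nat) : {poly R} :=
  'X^2 + c2 *: 'X + (c2 ^+ 2 / 4%:R - ((2 * n + 1)%:R) ^+ 2 / 16%:R)%:P.

Lemma Qp_monic (R : numFieldType) (c2 : R) n : Qp c2 n \is monic /\ size (Qp c2 n) = 3%N.
Proof.
pose q : {poly R} := c2 *: 'X + (c2 ^+ 2 / 4%:R - ((2 * n + 1)%:R) ^+ 2 / 16%:R)%:P.
have hs : (size q < size ('X^2 : {poly R}))%N.
  rewrite size_polyXn; apply: (leq_ltn_trans (size_polyD _ _)).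
  rewrite gtn_max; apply/andP; split.
    by apply: (leq_ltn_trans (size_scale_leq _ _)); rewrite size_polyX.
  by apply: (leq_ltn_trans (size_polyC_leq1 _)).
rewrite /Qp -addrA; split.
  by rewrite monicE lead_coefDl // lead_coefXn.
by rewrite size_polyDl // size_polyXn.
Qed.

Lemma theta0 (R : numFieldType) (c2 : R) : theta c2 0 = 1.
Proof. by rewrite /theta /poch !big_ord0 expr0 invr1 mulr1 scale1r. Qed.
Lemma prodid (R : comNzRingType) (a b : R) :
  (2%:R *: 'X + a%:P) * (- (2%:R *: 'X) + b%:P) =
  (-4 : R) *: 'X^2 + (2 * (b - a)) *: 'X + (a * b)%:P :> {poly R}.
Proof.

rewrite -!mul_polyC.
ring.
Qed.

Lemma quadid (R : numFieldType) (c2 : R) (n : nat) :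
  (-4 : R)^-1 *: ((2%:R *: 'X + (2^-1 + c2 + n%:R)%:P) * (- (2%:R *: 'X) + (2^-1 - c2 + n%:R)%:P))
  = 'X^2 + c2 *: 'X + (c2 ^+ 2 / 4%:R - ((2 * n + 1)%:R) ^+ 2 / 16%:R)%:P :> {poly R}.
Proof.
have h4 : (4:R) != 0 by rewrite pnatr_eq0.
have h2 : (2:R) != 0 by rewrite pnatr_eq0.
rewrite prodid !scalerDr !scalerA scale_polyC.
have -> : (-4 : R)^-1 * -4 = 1 by field.
have -> : (-4 : R)^-1 * (2 * (2^-1 - c2 + n%:R - (2^-1 + c2 + n%:R))) = c2 by field.
have -> : (-4 : R)^-1 * ((2^-1 + c2 + n%:R) * (2^-1 - c2 + n%:R)) = c2 ^+ 2 / 4%:R - ((2 * n + 1)%:R) ^+ 2 / 16%:R.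
  by rewrite natrD natrM; field.
by rewrite scale1r.
Qed.

Lemma thetaS (R : numFieldType) (c2 : R) n : theta c2 n.+1 = theta c2 n * Qp c2 n.
Proof.
rewrite /theta /poch !big_ord_recr /= /Qp -quadid.
rewrite -scalerAl -scalerAr scalerA exprSr invfM.
congr (_ *: _).
rewrite !polyCD.
ring.
Qed.

Lemma theta_monic (R : numFieldType) (c2 : R) n :
  theta c2 n \is monic /\ size (theta c2 n) = (2 * n).+1.
Proof.
elim: n => [|n [IHm IHs]]; first by rewrite theta0 monic1 size_poly1.
have [Qm Qs] := Qp_monic c2 n.
rewrite thetaS; split; first by rewrite monicMr.
rewrite size_monicM ?IHs ?Qs ?monic_neq0 //; lia.
Qed.

Lemma theta_indep (R : numFieldType) (c2 : R) N (a : nat -> R) :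
  \sum_(k < N) a k *: theta c2 k = 0 -> forall k, (k < N)%N -> a k = 0.
Proof.
elim: N => [|N IH] H k; first by [].
rewrite big_ord_recr /= in H.
have aN : a N = 0.
  have := congr1 (fun p : {poly R} => p`_(2 * N)) H.
  rewrite coefD coefZ coef0.
  have [tm ts] := theta_monic c2 N.
  have -> : (theta c2 N)`_(2 * N) = 1.
    by move/monicP: tm; rewrite lead_coefE ts.
  rewrite nth_default ?add0r ?mulr1 //.
  apply: (leq_trans (size_sum _ _ _)).
  apply/bigmax_leqP => i _.
  apply: (leq_trans (size_scale_leq _ _)).
  have [_ ->] := theta_monic c2 i.
  have := ltn_ord i; lia.
rewrite aN scale0r addr0 in H.
rewrite ltnS leq_eqVlt => /orP [/eqP -> //|]; exact: IH.
Qed.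

Lemma sum_delta (R : numFieldType) (F : nat -> R) m i :
  \sum_(j < m) (if (j : nat) == i then F j else 0) = if (i < m)%N then F i else 0.
Proof. by rewrite -big_mkcond big_ord1_eq. Qed.

Lemma bandL (R : numFieldType) (beta gamma : nat -> R) (A : nat -> nat -> R) n k :
  bandmul (jacobiL beta gamma) A n k =
  A n.+1 k + beta n * A n k + gamma n * (if n is m.+1 then A m k else 0).
Proof.
rewrite /bandmul big_ord_recr big_ord_recr /= /jacobiL eqxx.
rewrite (_ : (n == n.+1) = false); last by lia.
rewrite eqxx mul1r.
case: n => [|m].
  by rewrite big_ord0 add0r mulr0 addr0 addrC.
rewrite big_ord_recr /= big1.
  rewrite (_ : (m == m.+2) = false); last by lia.
  rewrite (_ : (m == m.+1) = false); last by lia.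
  rewrite eqxx add0r; ring.
move=> i _.
have := ltn_ord i => hi.
rewrite (_ : ((i:nat) == m.+2) = false); last by lia.
rewrite (_ : ((i:nat) == m.+1) = false); last by lia.
rewrite (_ : ((i:nat).+1 == m.+1) = false); last by lia.
by rewrite mul0r.
Qed.

Lemma bandR (R : numFieldType) (A : nat -> nat -> R) (f : nat -> R) n k :
  (forall n k, (n < k)%N -> A n k = 0) ->
  bandmul A (X1 f) n k =
  (if k is k'.+1 then A n k' else 0) + A n k * f k.
Proof.
move=> Atri.
rewrite /bandmul /X1 /shiftX.
under eq_bigr do rewrite mulrDr.
rewrite big_split /=; congr (_ + _).
  case: k => [|k].
    by rewrite big1 // => i _; rewrite mulr0.
  under eq_bigr => i _ do rewrite eqSS eq_sym (fun_if (fun x => A n i * x)) mulr1 mulr0.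
  rewrite (sum_delta (fun j => A n j)).
  by case: ltnP => // h; rewrite Atri //; lia.
under eq_bigr => i _ do rewrite eq_sym (fun_if (fun x => A n i * x)) mulr0.
rewrite (sum_delta (fun j => A n j * f j)).
by case: ltnP => // h; rewrite Atri ?mul0r //; lia.
Qed.

Lemma Pext (R : numFieldType) (c2 : R) (P : nat -> {poly R}) (A : nat -> nat -> R) :
  (forall n k, (n < k)%N -> A n k = 0) ->
  (forall n, P n = \sum_(k < n.+1) A n k *: theta c2 k) ->
  forall n m, (n < m)%N -> P n = \sum_(k < m) A n k *: theta c2 k.
Proof.
move=> Atri HP n m hnm.
rewrite HP (big_ord_widen m (fun k => A n k *: theta c2 k) hnm) big_mkcond /=.
apply: eq_bigr => i _; case: ltnP => // h.
by rewrite Atri ?scale0r //.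
Qed.

Theorem lemma2p1 (R : numFieldType) (c2 c3 : R)
  (P : nat -> {poly R}) (beta gamma : nat -> R)
  (A : nat -> nat -> R) (f : nat -> R) :
  (* P_n is a monic polynomial of degree n in mu(t) *)
  (forall n, exists q : {poly R},
       q \is monic /\ size q = n.+1 /\ P n = q \Po mu c2 c3) ->
  (* three-term recurrence, P_{-1} = 0, P_0 = 1 *)
  P 0 = 1 ->
  (forall n, mu c2 c3 * P n =
             P n.+1 + beta n *: P n
             + gamma n *: (if n is m.+1 then P m else 0)) ->
  (* expansion P_n = sum_{k=0}^n A_{n,k} theta_k, A lower triangular *)
  (forall n k, (n < k)%N -> A n k = 0) ->
  (forall n, P n = \sum_(k < n.+1) A n k *: theta c2 k) ->
  (* definition of f_n *)
  (forall n, mu c2 c3 * theta c2 n = theta c2 n.+1 + f n *: theta c2 n) ->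
  (forall n, f n = - (c2 ^+ 2) / 4%:R + ((2 * n + 1)%:R) ^+ 2 / 16%:R + c3)
  /\ (forall n k, bandmul (jacobiL beta gamma) A n k = bandmul A (X1 f) n k).
Proof.
move=> _ _ Hrec Atri HP Hf.
have fE : forall n, f n = - (c2 ^+ 2) / 4%:R + ((2 * n + 1)%:R) ^+ 2 / 16%:R + c3.
  move=> n.
  pose g := - (c2 ^+ 2) / 4%:R + ((2 * n + 1)%:R) ^+ 2 / 16%:R + c3.
  have hmu : mu c2 c3 = Qp c2 n + g%:P.
    rewrite /mu /Qp -!addrA; congr (_ + (_ + _)); rewrite -polyCD; congr (_%:P).
    rewrite /g; ring.
  have e : mu c2 c3 * theta c2 n = theta c2 n.+1 + g *: theta c2 n.
    by rewrite hmu mulrDl mul_polyC thetaS mulrC.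
  rewrite Hf in e; move/addrI: e => /eqP.
  rewrite -subr_eq0 -scalerBl scaler_eq0 subr_eq0 => /orP [/eqP //|].
  by have [/monic_neq0 /negPf -> _] := theta_monic c2 n.
split => // n k.
rewrite bandL (bandR _ _ _ Atri).
have PE := Pext Atri HP.
pose pm := fun k => if n is m.+1 then A m k else 0.
pose sh := fun k => if k is k'.+1 then A n k' else 0.
pose lc := fun k => A n.+1 k + beta n * A n k + gamma n * pm k.
pose rc := fun k => sh k + A n k * f k.
suff : lc k = rc k by [].
case: (ltnP k n.+2) => hk; last first.
  rewrite /lc /rc /pm /sh !Atri ?mulr0 ?mul0r ?addr0 //; try lia.
  case: (k) hk => [//|k'] hk; rewrite (Atri n k'); last lia.
  case: (n) hk => [|m] hk; first by rewrite mulr0 addr0.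
  by rewrite Atri ?mulr0 ?addr0 //; lia.
apply/eqP; rewrite -subr_eq0; apply/eqP; move: k hk.
apply: (theta_indep (c2 := c2)).
under eq_bigr do rewrite scalerBl.
rewrite sumrB; apply/eqP; rewrite subr_eq0; apply/eqP.
have L1 : \sum_(i < n.+2) lc i *: theta c2 i =
   P n.+1 + beta n *: P n + gamma n *: (if n is m.+1 then P m else 0).
  rewrite /lc.
  under eq_bigr do rewrite !scalerDl -!scalerA.
  rewrite !big_split /= -!scaler_sumr -!PE //.
  congr (_ + _ *: _); rewrite /pm.
  case: (n) => [|m]; first by rewrite big1 // => i _; rewrite scale0r.
  symmetry; apply: PE; lia.
have L2 : \sum_(i < n.+2) rc i *: theta c2 i = mu c2 c3 * P n.
  rewrite /rc /sh.
  under eq_bigr do rewrite !scalerDl -!scalerA.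
  rewrite big_split /= big_ord_recl /=.
  set z := (X in X + _ + _); have -> : z = 0 by apply: scale0r.
  rewrite add0r.
  rewrite [\sum_(i < n.+2) _]big_ord_recr /= Atri //.
  set z2 := (X in _ + (_ + X)); have -> : z2 = 0 by apply: scale0r.
  rewrite addr0.
  under eq_bigr do rewrite add0n /bump /= add1n.
  rewrite HP mulr_sumr -big_split /=.
  apply: eq_bigr => i _.
  by rewrite -scalerAr Hf scalerDr.
by rewrite L1 L2 Hrec.
Qed.
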